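(* Let $s\ge2$ and $l_1,\dots,l_s$ be positive integers with $\sum_{i=1}^s l_i\ge 3$. Then the graph $P_{l_1}\uplus P_{l_2}\uplus\cdots\uplus P_{l_s}\uplus K_1$ has a dispersed $4$-placement.
   Context: $P_m$ is the path on $m$ vertices, $K_1$ a single vertex, and $\uplus$ denotes vertex-disjoint union. For a graph $H$ on $m$ vertices, a $k$-placement of $H$ is a $k$-tuple $(\phi_1,\dots,\phi_k)$ of bijections $\phi_i:V(H)\to V(K_m)$ with pairwise disjoint edge sets $\phi_i(E(H))=\{\phi_i(x)\phi_i(y):xy\in E(H)\}$; it is dispersed if $\phi_i(v)\ne\phi_j(v)$ for every vertex $v$ and all $i\ne j$. *)

(* Defs.v *)
From mathcomp Require Import all_boot perm.
Set Implicit Arguments. Unset Strict Implicit. Unset Printing Implicit Defensive.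

(* A (simple) graph on vertex set {0,...,n-1}, given by its vertex count and
   a list of edges (pairs of vertex numbers, read as unordered pairs). *)
Record graph := Graph { gV : nat; gE : seq (nat * nat) }.

Definition path_graph (l : nat) : graph :=
  Graph l [seq (i, i.+1) | i <- iota 0 l.-1].

Definition K1 : graph := Graph 1 [::].

Definition dunion (G1 G2 : graph) : graph :=
  Graph (gV G1 + gV G2)
        (gE G1 ++ [seq (e.1 + gV G1, e.2 + gV G1) | e <- gE G2]).

Definition paths_plus_K1 (ls : seq nat) : graph :=
  foldr dunion K1 (map path_graph ls).

Definition adj (G : graph) (x y : 'I_(gV G)) : bool :=
  ((nat_of_ord x, nat_of_ord y) \in gE G) || ((nat_of_ord y, nat_of_ord x) \in gE G).

(* phi(E(G)) as a set of unordered pairs of vertices of K_m, m = |V(G)| *)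
Definition edge_image (G : graph) (phi : {perm 'I_(gV G)}) : {set {set 'I_(gV G)}} :=
  [set [set phi x; phi y] | x in 'I_(gV G), y in 'I_(gV G) & @adj G x y].

Definition placement (G : graph) (k : nat) (phi : 'I_k -> {perm 'I_(gV G)}) : Prop :=
  forall i j : 'I_k, i != j -> [disjoint edge_image (phi i) & edge_image (phi j)].

Definition dispersed (G : graph) (k : nat) (phi : 'I_k -> {perm 'I_(gV G)}) : Prop :=
  forall (i j : 'I_k) (v : 'I_(gV G)), i != j -> phi i v != phi j v.

(* Main.v *)
Require Import Defs.
From mathcomp Require Import all_boot perm zify.
Set Implicit Arguments. Unset Strict Implicit. Unset Printing Implicit Defensive.

Lemma set2_eq (T : finType) (p q r s : T) :
  [set p; q] = [set r; s] -> (p = r /\ q = s) \/ (p = s /\ q = r).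
Proof.
move=> E.
have hp : p \in [set r; s] by rewrite -E !inE eqxx.
have hq : q \in [set r; s] by rewrite -E !inE eqxx orbT.
have hr : r \in [set p; q] by rewrite E !inE eqxx.
have hs : s \in [set p; q] by rewrite E !inE eqxx orbT.
rewrite !inE in hp hq hr hs.
case/orP: hp => /eqP ?; case/orP: hq => /eqP ?; case/orP: hr => /eqP ?;
  case/orP: hs => /eqP ?; subst; auto.
Qed.

Lemma mk (G : graph) (f : nat -> nat -> nat) :
 (forall k v, k < 4 -> v < gV G -> f k v < gV G) ->
 (forall k u v, k < 4 -> u < gV G -> v < gV G -> f k u = f k v -> u = v) ->
 (forall k j v, k < 4 -> j < 4 -> k != j -> v < gV G -> f k v != f j v) ->
 (forall k j a b c d, k < 4 -> j < 4 -> k != j -> (a, b) \in gE G -> (c, d) \in gE G ->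
    a < gV G -> b < gV G -> c < gV G -> d < gV G ->
    ~ ((f k a = f j c /\ f k b = f j d) \/ (f k a = f j d /\ f k b = f j c))) ->
 exists phi : 'I_4 -> {perm 'I_(gV G)}, placement phi /\ dispersed phi.
Proof.
move=> Hr Hi Hd He.
pose g (k : 'I_4) (x : 'I_(gV G)) : 'I_(gV G) := Ordinal (Hr k x (ltn_ord k) (ltn_ord x)).
have gi : forall k, injective (g k).
  move=> k x y /(congr1 val) /= /Hi; move/(_ (ltn_ord k) (ltn_ord x) (ltn_ord y)).
  by move=> /val_inj.
exists (fun k => perm (gi k)); split.
- move=> i j ij; rewrite disjoint_sym; apply/pred0P => S /=.
  apply/negP => /andP [].
  move=> /imset2P [x y _]; rewrite inE => axy ->.
  move=> /imset2P [x' y' _]; rewrite inE => axy' /set2_eq.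
  rewrite !permE => H.
  have vv : forall (u v : 'I_(gV G)), u = v -> val u = val v by move=> ? ? ->.
  have {}H : ((f j x = f i x' /\ f j y = f i y') \/ (f j x = f i y' /\ f j y = f i x')).
    by case: H => [[/vv /= -> /vv /= ->]|[/vv /= -> /vv /= ->]]; auto.
  have ji : (nat_of_ord j) != (nat_of_ord i) by rewrite eq_sym.
  move: axy axy'; rewrite /adj => /orP [] E1 /orP [] E2.
  + by apply: (He _ _ _ _ _ _ (ltn_ord j) (ltn_ord i) ji E1 E2) => //; case: H; auto.
  + apply: (He _ _ _ _ _ _ (ltn_ord j) (ltn_ord i) ji E1 E2) => //; case: H; tauto.
  + apply: (He _ _ _ _ _ _ (ltn_ord j) (ltn_ord i) ji E1 E2) => //; case: H; tauto.
  + apply: (He _ _ _ _ _ _ (ltn_ord j) (ltn_ord i) ji E1 E2) => //; case: H; tauto.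
- move=> i j v ij; rewrite !permE; apply/eqP => /(congr1 val) /=.
  by apply/eqP/Hd.
Qed.

Lemma gV_pp ls : gV (paths_plus_K1 ls) = sumn ls + 1.
Proof. by elim: ls => //= l ls IH; rewrite IH addnA. Qed.

Lemma gE_pp ls a b : (a, b) \in gE (paths_plus_K1 ls) -> b = a.+1 /\ b < sumn ls.
Proof.
elim: ls a b => [|l ls IH] a b //=.
rewrite mem_cat => /orP [].
  case/mapP=> i; rewrite mem_iota => /andP [_ hi] [-> ->]; split => //; lia.
case/mapP=> [[c d]] /IH [-> hd] /= [-> ->]; split; lia.
Qed.

Definition zz (m v : nat) := if odd v then v./2 + 1 else (if v./2 == 0 then 0 else m - v./2).
Definition ff (m k v : nat) := let A := zz m v + k in if A < m then A else A - m.

Lemma zE m v : exists i,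
  (v = i.*2 /\ ((i = 0 /\ zz m v = 0) \/ (0 < i /\ zz m v = m - i))) \/
  (v = i.*2.+1 /\ zz m v = i + 1).
Proof.
exists v./2; rewrite /zz; have := odd_double_half v.
case: (odd v) => E; simpl in E.
  by right; split => //; lia.
left; split; first by lia.
by case: eqP => H; [left | right]; split=> //; lia.
Qed.

Lemma fE m k v : (zz m v + k < m /\ ff m k v = zz m v + k) \/
  (m <= zz m v + k /\ ff m k v = zz m v + k - m).
Proof. rewrite /ff; case: ltnP; [left|right]; split => //. Qed.

Section Big.
Variables (m : nat) (Hm : 8 <= m).

Lemma ff_range k v : k < 4 -> v < m -> ff m k v < m.
Proof. move=> hk hv; have [i Hz] := zE m v; have := fE m k v; lia. Qed.

Lemma ff_inj k u v : k < 4 -> u < m -> v < m -> ff m k u = ff m k v -> u = v.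
Proof.
move=> hk hu hv; have [i Hz] := zE m u; have [i' Hz'] := zE m v.
have := fE m k u; have := fE m k v; lia.
Qed.

Lemma ff_disp k j v : k < 4 -> j < 4 -> k != j -> v < m -> ff m k v != ff m j v.
Proof.
move=> hk hj kj hv; apply/eqP; have [i Hz] := zE m v.
have := fE m k v; have := fE m j v; lia.
Qed.

Lemma ff_sum k a : k < 4 -> a.+1 < m ->
  let S := ff m k a + ff m k a.+1 in
  S = k.*2 \/ S = k.*2.+1 \/ S = k.*2 + m \/ S = k.*2.+1 + m.
Proof.
move=> hk ha /=.
have [i1 H1] := zE m a; have [i2 H2] := zE m a.+1.
have := fE m k a; have := fE m k a.+1.
lia.
Qed.
Lemma ff_edge k j a c : k < 4 -> j < 4 -> k != j -> a.+1 < m -> c.+1 < m ->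
  ~ ((ff m k a = ff m j c /\ ff m k a.+1 = ff m j c.+1) \/
     (ff m k a = ff m j c.+1 /\ ff m k a.+1 = ff m j c)).
Proof.
move=> hk hj kj ha hc H.
have E : ff m k a + ff m k a.+1 = ff m j c + ff m j c.+1 by case: H => [[-> ->]|[-> ->]]; lia.
have := ff_sum hk ha; have := ff_sum hj hc; move: kj E => /eqP; lia.
Qed.
End Big.

Definition fw (w : seq (seq nat)) k v := nth 0 (nth [::] w k) v.

Definition chk (G : graph) (w : seq (seq nat)) : bool :=
 [&& all (fun k => perm_eq (nth [::] w k) (iota 0 (gV G))) (iota 0 4),
     all (fun k => all (fun j => (k == j) ||
        all (fun v => fw w k v != fw w j v) (iota 0 (gV G))) (iota 0 4)) (iota 0 4) &
     all (fun k => all (fun j => (k == j) || all (fun e => all (fun e' =>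
        ~~ (((fw w k e.1 == fw w j e'.1) && (fw w k e.2 == fw w j e'.2)) ||
            ((fw w k e.1 == fw w j e'.2) && (fw w k e.2 == fw w j e'.1)))) (gE G)) (gE G))
       (iota 0 4)) (iota 0 4)].

Lemma chk_ok G w : chk G w ->
 [/\ (forall k v, k < 4 -> v < gV G -> fw w k v < gV G),
 (forall k u v, k < 4 -> u < gV G -> v < gV G -> fw w k u = fw w k v -> u = v),
 (forall k j v, k < 4 -> j < 4 -> k != j -> v < gV G -> fw w k v != fw w j v) &
 (forall k j a b c d, k < 4 -> j < 4 -> k != j -> (a, b) \in gE G -> (c, d) \in gE G ->
    a < gV G -> b < gV G -> c < gV G -> d < gV G ->
    ~ ((fw w k a = fw w j c /\ fw w k b = fw w j d) \/ (fw w k a = fw w j d /\ fw w k b = fw w j c)))].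
Proof.
case/and3P => /allP P /allP D /allP E.
have Pk : forall k, k < 4 -> perm_eq (nth [::] w k) (iota 0 (gV G)).
  by move=> k hk; apply: P; rewrite mem_iota.
split.
- move=> k v hk hv; have pk := Pk k hk.
  have hs : v < size (nth [::] w k) by rewrite (perm_size pk) size_iota.
  have := mem_nth 0 hs; rewrite (perm_mem pk) mem_iota; done.
- move=> k u v hk hu hv; have pk := Pk k hk.
  have U : uniq (nth [::] w k) by rewrite (perm_uniq pk) iota_uniq.
  have sz : size (nth [::] w k) = gV G by rewrite (perm_size pk) size_iota.
  rewrite /fw => H; apply/eqP.
  have hu' : u < size (nth [::] w k) by rewrite sz.
  have hv' : v < size (nth [::] w k) by rewrite sz.
  by rewrite -(nth_uniq 0 hu' hv' U) H.
- move=> k j v hk hj kj hv.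
  have mk : k \in iota 0 4 by rewrite mem_iota.
  have mj : j \in iota 0 4 by rewrite mem_iota.
  move: (allP (D k mk) j mj).
  by rewrite (negbTE kj) /= => /allP; apply; rewrite mem_iota.
- move=> k j a b c d hk hj kj ea ec _ _ _ _.
  have mk : k \in iota 0 4 by rewrite mem_iota.
  have mj : j \in iota 0 4 by rewrite mem_iota.
  move: (allP (E k mk) j mj).
  rewrite (negbTE kj) /= => /allP /(_ _ ea) /allP /(_ _ ec) /= /negP H H'; apply: H.
  by case: H' => [[-> ->]|[-> ->]]; rewrite !eqxx ?orbT.
Qed.

Definition tab : seq (seq nat * seq (seq nat)) := [::
  ([:: 1; 1; 1], [:: [:: 0; 1; 2; 3]; [:: 1; 0; 3; 2]; [:: 2; 3; 0; 1]; [:: 3; 2; 1; 0]]);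
  ([:: 1; 2], [:: [:: 0; 1; 2; 3]; [:: 1; 0; 3; 2]; [:: 2; 3; 1; 0]; [:: 3; 2; 0; 1]]);
  ([:: 2; 1], [:: [:: 0; 1; 2; 3]; [:: 1; 2; 3; 0]; [:: 2; 3; 0; 1]; [:: 3; 0; 1; 2]]);
  ([:: 1; 1; 1; 1], [:: [:: 0; 1; 2; 3; 4]; [:: 1; 0; 3; 4; 2]; [:: 2; 3; 4; 0; 1]; [:: 3; 4; 1; 2; 0]]);
  ([:: 1; 1; 2], [:: [:: 0; 1; 2; 3; 4]; [:: 1; 0; 3; 4; 2]; [:: 2; 3; 4; 0; 1]; [:: 3; 4; 1; 2; 0]]);
  ([:: 1; 2; 1], [:: [:: 0; 1; 2; 3; 4]; [:: 1; 0; 3; 4; 2]; [:: 2; 3; 4; 0; 1]; [:: 3; 4; 1; 2; 0]]);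
  ([:: 1; 3], [:: [:: 0; 1; 2; 3; 4]; [:: 1; 2; 4; 0; 3]; [:: 2; 4; 3; 1; 0]; [:: 3; 0; 1; 4; 2]]);
  ([:: 2; 1; 1], [:: [:: 0; 1; 2; 3; 4]; [:: 1; 2; 0; 4; 3]; [:: 2; 3; 4; 0; 1]; [:: 3; 4; 1; 2; 0]]);
  ([:: 2; 2], [:: [:: 0; 1; 2; 3; 4]; [:: 1; 2; 4; 0; 3]; [:: 2; 4; 3; 1; 0]; [:: 3; 0; 1; 4; 2]]);
  ([:: 3; 1], [:: [:: 0; 1; 2; 3; 4]; [:: 1; 3; 0; 4; 2]; [:: 2; 0; 4; 1; 3]; [:: 3; 4; 1; 2; 0]]);
  ([:: 1; 1; 1; 1; 1], [:: [:: 0; 1; 2; 3; 4; 5]; [:: 1; 0; 3; 2; 5; 4]; [:: 2; 3; 4; 5; 0; 1]; [:: 3; 2; 5; 4; 1; 0]]);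
  ([:: 1; 1; 1; 2], [:: [:: 0; 1; 2; 3; 4; 5]; [:: 1; 0; 3; 2; 5; 4]; [:: 2; 3; 4; 5; 0; 1]; [:: 3; 2; 5; 4; 1; 0]]);
  ([:: 1; 1; 2; 1], [:: [:: 0; 1; 2; 3; 4; 5]; [:: 1; 0; 3; 4; 5; 2]; [:: 2; 3; 0; 5; 1; 4]; [:: 3; 4; 5; 1; 2; 0]]);
  ([:: 1; 1; 3], [:: [:: 0; 1; 2; 3; 4; 5]; [:: 1; 0; 3; 5; 2; 4]; [:: 2; 3; 0; 4; 5; 1]; [:: 3; 4; 5; 0; 1; 2]]);
  ([:: 1; 2; 1; 1], [:: [:: 0; 1; 2; 3; 4; 5]; [:: 1; 0; 3; 2; 5; 4]; [:: 2; 3; 4; 5; 0; 1]; [:: 3; 2; 5; 4; 1; 0]]);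
  ([:: 1; 2; 2], [:: [:: 0; 1; 2; 3; 4; 5]; [:: 1; 0; 3; 2; 5; 4]; [:: 2; 3; 5; 4; 0; 1]; [:: 3; 2; 4; 5; 1; 0]]);
  ([:: 1; 3; 1], [:: [:: 0; 1; 2; 3; 4; 5]; [:: 1; 0; 3; 4; 5; 2]; [:: 2; 3; 1; 5; 0; 4]; [:: 3; 4; 5; 0; 2; 1]]);
  ([:: 1; 4], [:: [:: 0; 1; 2; 3; 4; 5]; [:: 1; 0; 3; 5; 2; 4]; [:: 2; 3; 1; 4; 5; 0]; [:: 5; 2; 4; 0; 1; 3]]);
  ([:: 2; 1; 1; 1], [:: [:: 0; 1; 2; 3; 4; 5]; [:: 1; 2; 0; 4; 5; 3]; [:: 2; 0; 1; 5; 3; 4]; [:: 3; 4; 5; 0; 1; 2]]);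
  ([:: 2; 1; 2], [:: [:: 0; 1; 2; 3; 4; 5]; [:: 1; 2; 0; 4; 5; 3]; [:: 2; 3; 1; 5; 0; 4]; [:: 3; 5; 4; 0; 2; 1]]);
  ([:: 2; 2; 1], [:: [:: 0; 1; 2; 3; 4; 5]; [:: 1; 2; 0; 4; 5; 3]; [:: 2; 0; 1; 5; 3; 4]; [:: 3; 4; 5; 0; 1; 2]]);
  ([:: 2; 3], [:: [:: 0; 1; 2; 3; 4; 5]; [:: 1; 2; 0; 4; 5; 3]; [:: 2; 4; 3; 5; 1; 0]; [:: 5; 0; 4; 1; 3; 2]]);
  ([:: 3; 1; 1], [:: [:: 0; 1; 2; 3; 4; 5]; [:: 1; 3; 0; 2; 5; 4]; [:: 2; 0; 4; 5; 1; 3]; [:: 3; 2; 5; 4; 0; 1]]);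
  ([:: 3; 2], [:: [:: 0; 1; 2; 3; 4; 5]; [:: 1; 3; 0; 2; 5; 4]; [:: 2; 4; 1; 5; 0; 3]; [:: 3; 5; 4; 0; 2; 1]]);
  ([:: 4; 1], [:: [:: 0; 1; 2; 3; 4; 5]; [:: 1; 3; 0; 2; 5; 4]; [:: 2; 4; 1; 5; 0; 3]; [:: 3; 5; 4; 0; 1; 2]]);
  ([:: 1; 1; 1; 1; 1; 1], [:: [:: 0; 1; 2; 3; 4; 5; 6]; [:: 1; 0; 3; 2; 5; 6; 4]; [:: 2; 3; 0; 1; 6; 4; 5]; [:: 3; 4; 5; 6; 0; 1; 2]]);
  ([:: 1; 1; 1; 1; 2], [:: [:: 0; 1; 2; 3; 4; 5; 6]; [:: 1; 0; 3; 2; 5; 6; 4]; [:: 2; 3; 0; 1; 6; 4; 5]; [:: 3; 4; 5; 6; 0; 1; 2]]);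
  ([:: 1; 1; 1; 2; 1], [:: [:: 0; 1; 2; 3; 4; 5; 6]; [:: 1; 0; 3; 2; 5; 6; 4]; [:: 2; 3; 0; 1; 6; 4; 5]; [:: 3; 4; 5; 6; 0; 1; 2]]);
  ([:: 1; 1; 1; 3], [:: [:: 0; 1; 2; 3; 4; 5; 6]; [:: 1; 0; 3; 2; 5; 6; 4]; [:: 2; 3; 0; 1; 6; 4; 5]; [:: 3; 4; 5; 6; 0; 1; 2]]);
  ([:: 1; 1; 2; 1; 1], [:: [:: 0; 1; 2; 3; 4; 5; 6]; [:: 1; 0; 3; 4; 2; 6; 5]; [:: 2; 3; 0; 5; 6; 1; 4]; [:: 3; 2; 1; 6; 5; 4; 0]]);
  ([:: 1; 1; 2; 2], [:: [:: 0; 1; 2; 3; 4; 5; 6]; [:: 1; 0; 3; 4; 2; 6; 5]; [:: 2; 3; 0; 5; 6; 1; 4]; [:: 3; 2; 5; 6; 0; 4; 1]]);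
  ([:: 1; 1; 3; 1], [:: [:: 0; 1; 2; 3; 4; 5; 6]; [:: 1; 0; 3; 5; 2; 6; 4]; [:: 2; 3; 0; 1; 6; 4; 5]; [:: 3; 2; 4; 6; 5; 0; 1]]);
  ([:: 1; 1; 4], [:: [:: 0; 1; 2; 3; 4; 5; 6]; [:: 1; 0; 3; 5; 2; 6; 4]; [:: 2; 3; 0; 1; 6; 4; 5]; [:: 3; 4; 5; 6; 0; 2; 1]]);
  ([:: 1; 2; 1; 1; 1], [:: [:: 0; 1; 2; 3; 4; 5; 6]; [:: 1; 0; 3; 2; 5; 6; 4]; [:: 2; 3; 1; 0; 6; 4; 5]; [:: 3; 4; 5; 6; 0; 1; 2]]);
  ([:: 1; 2; 1; 2], [:: [:: 0; 1; 2; 3; 4; 5; 6]; [:: 1; 0; 3; 2; 5; 6; 4]; [:: 2; 3; 1; 0; 6; 4; 5]; [:: 4; 2; 5; 6; 0; 1; 3]]);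
  ([:: 1; 2; 2; 1], [:: [:: 0; 1; 2; 3; 4; 5; 6]; [:: 1; 0; 3; 2; 5; 6; 4]; [:: 2; 3; 1; 0; 6; 4; 5]; [:: 3; 4; 5; 6; 1; 0; 2]]);
  ([:: 1; 2; 3], [:: [:: 0; 1; 2; 3; 4; 5; 6]; [:: 1; 0; 3; 2; 5; 6; 4]; [:: 2; 3; 1; 0; 6; 4; 5]; [:: 4; 2; 6; 5; 0; 1; 3]]);
  ([:: 1; 3; 1; 1], [:: [:: 0; 1; 2; 3; 4; 5; 6]; [:: 1; 0; 3; 4; 2; 6; 5]; [:: 2; 3; 1; 5; 6; 0; 4]; [:: 3; 2; 0; 6; 5; 4; 1]]);
  ([:: 1; 3; 2], [:: [:: 0; 1; 2; 3; 4; 5; 6]; [:: 1; 0; 3; 4; 2; 6; 5]; [:: 2; 3; 1; 5; 6; 0; 4]; [:: 3; 2; 5; 6; 0; 4; 1]]);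
  ([:: 1; 4; 1], [:: [:: 0; 1; 2; 3; 4; 5; 6]; [:: 1; 0; 3; 5; 2; 6; 4]; [:: 2; 3; 1; 0; 6; 4; 5]; [:: 3; 2; 4; 6; 5; 0; 1]]);
  ([:: 1; 5], [:: [:: 0; 1; 2; 3; 4; 5; 6]; [:: 1; 0; 3; 5; 2; 6; 4]; [:: 2; 3; 1; 0; 6; 4; 5]; [:: 6; 2; 4; 1; 5; 0; 3]]);
  ([:: 2; 1; 1; 1; 1], [:: [:: 0; 1; 2; 3; 4; 5; 6]; [:: 1; 2; 0; 4; 3; 6; 5]; [:: 2; 0; 1; 5; 6; 3; 4]; [:: 3; 4; 5; 6; 0; 1; 2]]);
  ([:: 2; 1; 1; 2], [:: [:: 0; 1; 2; 3; 4; 5; 6]; [:: 1; 2; 0; 4; 3; 6; 5]; [:: 2; 0; 1; 5; 6; 4; 3]; [:: 3; 4; 6; 0; 5; 1; 2]]);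
  ([:: 2; 1; 2; 1], [:: [:: 0; 1; 2; 3; 4; 5; 6]; [:: 1; 2; 0; 4; 5; 6; 3]; [:: 2; 0; 1; 5; 6; 3; 4]; [:: 3; 5; 4; 6; 0; 1; 2]]);
  ([:: 2; 1; 3], [:: [:: 0; 1; 2; 3; 4; 5; 6]; [:: 1; 2; 0; 4; 6; 3; 5]; [:: 2; 0; 3; 1; 5; 6; 4]; [:: 3; 5; 1; 6; 0; 4; 2]]);
  ([:: 2; 2; 1; 1], [:: [:: 0; 1; 2; 3; 4; 5; 6]; [:: 1; 2; 0; 4; 3; 6; 5]; [:: 2; 0; 1; 5; 6; 3; 4]; [:: 3; 4; 5; 6; 0; 1; 2]]);
  ([:: 2; 2; 2], [:: [:: 0; 1; 2; 3; 4; 5; 6]; [:: 1; 2; 0; 4; 3; 6; 5]; [:: 2; 0; 1; 5; 6; 4; 3]; [:: 3; 4; 6; 0; 5; 2; 1]]);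
  ([:: 2; 3; 1], [:: [:: 0; 1; 2; 3; 4; 5; 6]; [:: 1; 2; 0; 4; 5; 6; 3]; [:: 2; 0; 1; 5; 6; 3; 4]; [:: 3; 5; 4; 6; 0; 1; 2]]);
  ([:: 2; 4], [:: [:: 0; 1; 2; 3; 4; 5; 6]; [:: 1; 2; 0; 4; 6; 3; 5]; [:: 2; 0; 3; 1; 5; 6; 4]; [:: 3; 5; 1; 6; 2; 4; 0]]);
  ([:: 3; 1; 1; 1], [:: [:: 0; 1; 2; 3; 4; 5; 6]; [:: 1; 3; 0; 2; 5; 6; 4]; [:: 2; 0; 4; 1; 6; 3; 5]; [:: 3; 2; 5; 6; 0; 4; 1]]);
  ([:: 3; 1; 2], [:: [:: 0; 1; 2; 3; 4; 5; 6]; [:: 1; 3; 0; 2; 5; 6; 4]; [:: 2; 0; 4; 1; 6; 3; 5]; [:: 3; 2; 5; 6; 1; 4; 0]]);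
  ([:: 3; 2; 1], [:: [:: 0; 1; 2; 3; 4; 5; 6]; [:: 1; 3; 0; 2; 5; 6; 4]; [:: 2; 0; 4; 1; 6; 3; 5]; [:: 3; 2; 6; 5; 0; 4; 1]]);
  ([:: 3; 3], [:: [:: 0; 1; 2; 3; 4; 5; 6]; [:: 1; 3; 0; 2; 5; 6; 4]; [:: 2; 0; 4; 1; 6; 3; 5]; [:: 3; 2; 6; 5; 1; 4; 0]]);
  ([:: 4; 1; 1], [:: [:: 0; 1; 2; 3; 4; 5; 6]; [:: 1; 3; 0; 2; 5; 6; 4]; [:: 2; 4; 1; 5; 6; 0; 3]; [:: 3; 5; 4; 6; 0; 1; 2]]);
  ([:: 4; 2], [:: [:: 0; 1; 2; 3; 4; 5; 6]; [:: 1; 3; 0; 2; 5; 6; 4]; [:: 2; 4; 1; 5; 6; 0; 3]; [:: 5; 2; 6; 1; 3; 4; 0]]);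
  ([:: 5; 1], [:: [:: 0; 1; 2; 3; 4; 5; 6]; [:: 1; 3; 0; 2; 5; 6; 4]; [:: 2; 4; 1; 5; 6; 0; 3]; [:: 3; 5; 4; 6; 0; 1; 2]])].

Definition W ls := foldr (fun p acc => if p.1 == ls then p.2 else acc) [::] tab.

Fixpoint tuples L : seq (seq nat) :=
  if L is L'.+1 then [::] :: [seq x :: t | x <- iota 1 6, t <- tuples L'] else [:: [::]].

Lemma in_tuples ls L : size ls <= L -> all (fun x => 0 < x <= 6) ls -> ls \in tuples L.
Proof.
elim: ls L => [|x ls IH] [|L] //=; try by rewrite inE.
move=> hs /andP [hx ha]; rewrite inE; apply/orP; right.
have hxi : x \in iota 1 6 by rewrite mem_iota; lia.
exact: (allpairs_f (fun x t => x :: t) hxi (IH L hs ha)).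
Qed.

Lemma small_ok : all (fun ls => if (2 <= size ls) && (3 <= sumn ls <= 6) then
   chk (paths_plus_K1 ls) (W ls) else true) (tuples 6).
Proof. vm_compute. reflexivity. Qed.

Lemma le_sumn ls x : x \in ls -> x <= sumn ls.
Proof. elim: ls => //= y ls IH; rewrite inE => /orP [/eqP ->|/IH]; lia. Qed.

Lemma size_sumn ls : all (fun l => 0 < l) ls -> size ls <= sumn ls.
Proof. elim: ls => //= y ls IH /andP [h /IH]; lia. Qed.

Theorem lemma2p7 (ls : seq nat) :
  2 <= size ls -> all (fun l => 0 < l) ls -> 3 <= sumn ls ->
  exists phi : 'I_4 -> {perm 'I_(gV (paths_plus_K1 ls))},
    placement phi /\ dispersed phi.
Proof.
move=> hs hpos hsum.
case: (leqP 7 (sumn ls)) => big.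
  have Hm : 8 <= sumn ls + 1 by lia.
  apply: (@mk _ (ff (sumn ls + 1))); rewrite gV_pp.
  - by move=> k v hk hv; apply: ff_range.
  - by move=> k u v hk hu hv; apply: ff_inj.
  - by move=> k j v hk hj kj hv; apply: ff_disp.
  - move=> k j a b c d hk hj kj /gE_pp [-> hb] /gE_pp [-> hd] _ _ _ _.
    by apply: ff_edge => //; lia.
have hin : ls \in tuples 6.
  apply: in_tuples; first by have := size_sumn hpos; lia.
  apply/allP => x hx; have := le_sumn hx; have := allP hpos x hx; lia.
have := allP small_ok ls hin; rewrite hs hsum /= (_ : sumn ls <= 6) /=; last by lia.
move=> /chk_ok [H1 H2 H3 H4]; exact: mk H1 H2 H3 H4.
Qed.
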